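(* Let $B=(\tilde U\dot\cup U,E)$ and $B'=(\tilde U\dot\cup U,E')$ be bipartite graphs with $|U|\ge|\tilde U|$ and $\mathrm{nd}_{\tilde U}(B,B')\le s$. If there are positive integers $x,n_1,n_2,n_3$ such that (i) $\deg_{B'}(\tilde u)\ge n_1$ for all $\tilde u\in\tilde U$, (ii) $|N_{B'}(\tilde S)|\ge x|\tilde S|$ for all $\tilde S\subseteq\tilde U$ with $|\tilde S|\le n_2$, (iii) $e_{B'}(\tilde S,S)\le\frac{n_1}{n_3}|\tilde S||S|$ for all $\tilde S\subseteq\tilde U$, $S\subseteq U$ with $xn_2\le|S|<|\tilde S|<n_3$, (iv) $|N_B(S)\cap\tilde S|>s$ for all $\tilde S\subseteq\tilde U$, $S\subseteq U$ with $|\tilde S|\ge n_3$ and $|S|>|U|-|\tilde S|$, then $B'$ has a matching covering $\tilde U$.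
   Context: For bipartite graphs $B,B'$ on the same vertex set $\tilde U\dot\cup U$, $\mathrm{nd}_{\tilde U}(B,B')$ is the number of vertices $\tilde u\in\tilde U$ with $N_B(\tilde u)\ne N_{B'}(\tilde u)$. $N_B(S)$ denotes the set of vertices with a neighbour in $S$, and $e_{B'}(\tilde S,S)$ the number of edges of $B'$ between $\tilde S$ and $S$. *)

(* Defs.v *)
From mathcomp Require Import all_boot.
Set Implicit Arguments. Unset Strict Implicit. Unset Printing Implicit Defensive.

Definition bigraph (tU U : finType) := tU -> U -> bool.

Section BiGraph.
Variables (tU U : finType).
Implicit Types (B : bigraph tU U) (tS : {set tU}) (S : {set U}).

Definition nbh B (tu : tU) : {set U} := [set u | B tu u].
Definition degt B (tu : tU) : nat := #|nbh B tu|.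
Definition nbhT B tS : {set U} := [set u | [exists tu in tS, B tu u]].
Definition nbhU B S : {set tU} := [set tu | [exists u in S, B tu u]].
Definition ecount B tS S : nat := #|[set p : tU * U | (p.1 \in tS) && (p.2 \in S) && B p.1 p.2]|.
Definition nd B B' : nat := #|[set tu : tU | nbh B tu != nbh B' tu]|.
Definition has_matching_covering B : Prop :=
  exists f : tU -> U, injective f /\ forall tu, B tu (f tu).
End BiGraph.

(* Main.v *)
Require Import Defs.
From mathcomp Require Import all_boot.
From mathcomp Require Import zify.

Section Hall.
Variables (A B : finType) (R : A -> B -> bool) (b0 : B).

Definition NY (T : {set A}) (Y : {set B}) : {set B} :=
  [set b in Y | [exists a in T, R a b]].

Definition hallc (X : {set A}) (Y : {set B}) :=
  forall T : {set A}, T \subset X -> #|T| <= #|NY T Y|.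

Definition matched (X : {set A}) (Y : {set B}) (f : A -> B) :=
  {in X &, injective f} /\ {in X, forall a, (f a \in Y) && R a (f a)}.

Lemma hall_gen n : forall (X : {set A}) (Y : {set B}), #|X| <= n -> hallc X Y -> exists f, matched X Y f.
Proof.
elim: n => [|n IH] X Y hX hH.
  exists (fun _ => b0).
  have X0: X = set0 by apply/eqP; rewrite -cards_eq0; lia.
  by subst; split => a; rewrite inE.
case: (boolP [exists T : {set A},
   [&& T \subset X, 0 < #|T|, #|T| < #|X| & #|NY T Y| <= #|T|]]).
- case/existsP => T /and4P [sTX T0 TX NT].
  have [f1 [i1 m1]] : exists f, matched T Y f.
    apply: IH; first lia.
    move=> T' sT'; apply: hH; exact: subset_trans sT' sTX.
  set Y2 := Y :\: NY T Y.
  have [f2 [i2 m2]] : exists f, matched (X :\: T) Y2 f.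
    apply: IH; first by rewrite cardsDS //; lia.
    move=> T' sT'.
    have dis : T :&: T' = set0.
      apply/setP => a; rewrite !inE; apply/negP => /andP [aT aT'].
      by move: (subsetP sT' a aT'); rewrite inE aT.
    have hTT : #|T :|: T'| = #|T| + #|T'| by rewrite cardsU dis cards0; lia.
    have sub : NY (T :|: T') Y \subset NY T Y :|: NY T' Y2.
      apply/subsetP => b; rewrite !inE => /andP [bY /existsP [a /andP [aTT Rab]]].
      case bN: [exists a0 in T, R a0 b]; first by rewrite bY.
      rewrite /= bY /=; apply/existsP; exists a.
      move: aTT; rewrite inE Rab andbT => /orP [aT|//].
      by move/negbT/existsPn: bN => /(_ a); rewrite aT Rab.
    have sTT : T :|: T' \subset X.
      by rewrite subUset sTX (subset_trans sT') // subDset subsetUr.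
    have h1 := hH _ sTT.
    have h2 := subset_leq_card sub.
    have h3 := cardsU (NY T Y) (NY T' Y2).
    lia.
  exists (fun a => if a \in T then f1 a else f2 a); split.
  + move=> a a' aX a'X /=.
    have hNT : forall c, c \in T -> f1 c \in NY T Y.
      move=> c cT; move/andP: (m1 c cT) => [cY Rc].
      by rewrite inE cY; apply/existsP; exists c; rewrite cT Rc.
    have hN2 : forall c, c \in X -> c \notin T -> f2 c \notin NY T Y.
      move=> c cX cT; have : c \in X :\: T by rewrite inE cT cX.
      by move/m2/andP => [+ _]; rewrite inE => /andP [].
    case aT: (a \in T); case a'T: (a' \in T).
    * exact: i1.
    * move=> e; move: (hN2 a' a'X (negbT a'T)); by rewrite -e hNT.
    * move=> e; move: (hN2 a aX (negbT aT)); by rewrite e hNT.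
    * by apply: i2; rewrite inE ?aT ?a'T.
  + move=> a aX /=; case aT: (a \in T); first exact: m1.
    have : a \in X :\: T by rewrite inE aT aX.
    by move/m2/andP => [+ ->]; rewrite inE andbC => /andP [-> _].
- move/existsPn => hno.
  case: (boolP (X == set0)) => [/eqP X0|].
    by exists (fun _ => b0); subst; split => a; rewrite inE.
  case/set0Pn => a aX.
  have : 0 < #|NY [set a] Y|.
    apply: leq_trans (hH [set a] _); first by rewrite cards1.
    by rewrite sub1set.
  rewrite card_gt0 => /set0Pn [b]; rewrite inE => /andP [bY /existsP [a0]].
  rewrite inE => /andP [/eqP -> Rab].
  have [f' [i' m']] : exists f, matched (X :\ a) (Y :\ b) f.
    apply: IH; first by move: hX; rewrite (cardsD1 a X) aX; lia.
    move=> T sT.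
    case: (boolP (T == set0)) => [/eqP -> | Tne]; first by rewrite cards0.
    have cXa : #|X :\ a| < #|X| by rewrite (cardsD1 a X) aX.
    have TX : T \subset X by apply: subset_trans sT (subsetDl _ _).
    have cT : #|T| < #|X| := leq_ltn_trans (subset_leq_card sT) cXa.
    have := hno T; rewrite TX card_gt0 Tne cT /= -ltnNge => lt.
    have sub : NY T Y :\ b \subset NY T (Y :\ b).
      apply/subsetP => c; rewrite !inE => /andP [-> /andP [-> ->]] //.
    have := subset_leq_card sub.
    have := cardsD1 b (NY T Y).
    case: (b \in NY T Y) => /=; lia.
  exists (fun a' => if a' == a then b else f' a'); split.
  + move=> c c' cX c'X /=.
    have hb : forall d, d \in X -> d != a -> f' d != b.
      move=> d dX da; have : d \in X :\ a by rewrite !inE da dX.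
      by move/m'/andP => [+ _]; rewrite !inE => /andP [].
    case: (eqVneq c a) => [->|ca]; case: (eqVneq c' a) => [->|c'a] //.
    * by move=> e; move: (hb c' c'X c'a); rewrite -e eqxx.
    * by move=> e; move: (hb c cX ca); rewrite e eqxx.
    * by apply: i'; rewrite !inE ?ca ?c'a.
  + move=> c cX /=; case: (eqVneq c a) => [->|ca]; first by rewrite bY Rab.
    have : c \in X :\ a by rewrite !inE ca cX.
    by move/m'/andP => [+ ->]; rewrite !inE => /andP [_ ->].
Qed.

End Hall.

Lemma subset_card_ex {T : finType} {S : {set T}} {k} :
  k <= #|S| -> exists S' : {set T}, S' \subset S /\ #|S'| = k.
Proof.
elim: k => [|k IH] hk; first by exists set0; rewrite sub0set cards0.
have [S' [sS' cS']] := IH (ltnW hk).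
have : 0 < #|S :\: S'| by rewrite cardsDS //; lia.
rewrite card_gt0 => /set0Pn [y]; rewrite inE => /andP [yS' yS].
exists (y |: S'); split; first by rewrite subUset sub1set yS sS'.
by rewrite cardsU1 yS' cS'.
Qed.

Lemma ecountE (tU U : finType) (B : bigraph tU U) T S :
  ecount B T S = \sum_(t in T) #|nbh B t :&: S|.
Proof.
rewrite /ecount -sum1dep_card big_mkcond /=.
rewrite -(pair_bigA addn (fun i j => if (i \in T) && (j \in S) && B i j then 1 else 0)).
rewrite [RHS]big_mkcond /=; apply: eq_bigr => i _.
case iT: (i \in T) => /=.
  rewrite -sum1_card [RHS]big_mkcond /=; apply: eq_bigr => j _.
  by rewrite !inE andbC.
by rewrite big1.
Qed.

Theorem lemma11p8 (tU U : finType) (B B' : bigraph tU U) (s x n1 n2 n3 : nat) :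
  #|tU| <= #|U| ->
  nd B B' <= s ->
  0 < x -> 0 < n1 -> 0 < n2 -> 0 < n3 ->
  (forall tu : tU, n1 <= degt B' tu) ->
  (forall tS : {set tU}, #|tS| <= n2 -> x * #|tS| <= #|nbhT B' tS|) ->
  (forall (tS : {set tU}) (S : {set U}), x * n2 <= #|S| -> #|S| < #|tS| -> #|tS| < n3 ->
     ecount B' tS S * n3 <= n1 * #|tS| * #|S|) ->
  (forall (tS : {set tU}) (S : {set U}), n3 <= #|tS| -> #|U| - #|tS| < #|S| ->
     s < #|nbhU B S :&: tS|) ->
  has_matching_covering B'.
Proof.
move=> hc hnd x0 n10 n20 n30 hdeg h2 h3 h4.
have hall : forall T : {set tU}, #|T| <= #|nbhT B' T|.
  move=> T; rewrite leqNgt; apply/negP => hlt.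
  case: (leqP #|T| n2) => hTn2.
    have := h2 T hTn2; nia.
  case: (ltnP #|T| n3) => hTn3.
    have [T' [sT' cT']] := subset_card_ex (ltnW hTn2).
    have hS : x * n2 <= #|nbhT B' T|.
      rewrite -cT'; apply: leq_trans (h2 _ _) _; first by rewrite cT'.
      apply: subset_leq_card; apply/subsetP => u; rewrite !inE => /existsP [t /andP [tT' Bt]].
      by apply/existsP; exists t; rewrite (subsetP sT').
    have he := h3 T (nbhT B' T) hS hlt hTn3.
    have he2 : n1 * #|T| <= ecount B' T (nbhT B' T).
      rewrite ecountE mulnC -sum_nat_const; apply: leq_sum => t tT.
      rewrite (setIidPl _); first exact: hdeg.
      apply/subsetP => u; rewrite !inE => Btu; apply/existsP; exists t; by rewrite tT Btu.
    have hk : 0 < n1 * #|T| by rewrite muln_gt0 n10; lia.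
    move: he2 he hk hlt hTn3; set k := n1 * #|T|; set e := ecount _ _ _; set m := #|nbhT _ _|.
    nia.
  set S := ~: nbhT B' T.
  have cS : #|S| = #|U| - #|nbhT B' T| by rewrite cardsCs setCK.
  have hTU : #|T| <= #|U| := leq_trans (max_card T) hc.
  have hSS : #|U| - #|T| < #|S| by rewrite cS; lia.
  have := h4 T S hTn3 hSS.
  rewrite ltnNge => /negP; apply; apply: leq_trans _ hnd.
  apply: subset_leq_card; apply/subsetP => t; rewrite !inE.
  move=> /andP [/existsP [u /andP [uS Btu]] tT].
  apply/eqP => e.
  have : u \in nbh B t by rewrite inE.
  rewrite e inE => B't.
  move: uS; rewrite inE => /negP; apply; rewrite inE.
  by apply/existsP; exists t; rewrite tT B't.
case: (pickP (fun _ : tU => true)) => [t0 _ | hne]; last first.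
  have f : tU -> U by move=> t; have := hne t.
  by exists f; split; move=> t; have := hne t.
have : 0 < #|nbh B' t0| by apply: leq_trans (hdeg t0).
rewrite card_gt0 => /set0Pn [b0 _].
have [f [fi fm]] : exists f, @matched tU U B' setT setT f.
  apply: (@hall_gen tU U B' b0 #|tU|); first exact: max_card.
  move=> T _; have -> : @NY tU U B' T setT = nbhT B' T by apply/setP => u; rewrite !inE.
  exact: hall.
exists f; split.
  by move=> a a'; apply: fi; rewrite inE.
by move=> a; have /andP [_ ->] := fm a (in_setT a).
Qed.
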